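(* For each $n\ge0$ let $w(n)$ be the least integer $m\ge 0$ such that $a(m)\ge n$. If $n\ge 2$ and $k$ is such that $F_k\le n<F_{k+1}$, then $w(n)=F_k+1$.
   Context: Let $(F_n)_{n\ge 0}$ be the Fibonacci numbers: $F_0=0$, $F_1=1$, $F_n=F_{n-1}+F_{n-2}$ for $n\ge 2$. Define $(a(n))_{n\ge 0}$ (OEIS A105774) by $a(0)=0$, $a(1)=1$, and for $n\ge 2$, $a(n)=F_{j+1}-a(n-F_j)$, where $j\ge 2$ is the unique index with $F_j<n\le F_{j+1}$. *)

(* Defs.v *)
From Stdlib Require Import ZArith Arith Lia.
Open Scope Z_scope.

Fixpoint fib (n : nat) : nat :=
  match n with
  | O => 0%nat
  | S O => 1%nat
  | S ((S m) as p) => (fib p + fib m)%nat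
  end.

Fixpoint fib_search (fuel j n : nat) : nat :=
  match fuel with
  | O => j
  | S f => if (n <=? fib (S j))%nat then j else fib_search f (S j) n
  end.

(* For n >= 2, the unique j >= 2 with F_j < n <= F_{j+1}
   (the search starting at j = 2 returns the least j >= 2 with n <= F_{j+1};
    since F_3 = 2 <= n... minimality gives F_j < n). *)
Definition fib_index (n : nat) : nat := fib_search n 2 n.

(* a with fuel; values in Z so that subtraction is the true one. *)
Fixpoint a_fuel (fuel n : nat) : Z :=
  match fuel with
  | O => 0
  | S f =>
      if (n <=? 1)%nat then Z.of_nat n
      else let j := fib_index n in
           Z.of_nat (fib (S j)) - a_fuel f (n - fib j)
  end.

(* A105774: a(0)=0, a(1)=1, a(n) = F_{j+1} - a(n - F_j) for F_j < n <= F_{j+1}, j >= 2. *)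
Definition a (n : nat) : Z := a_fuel (S n) n.

Lemma a_0 : a 0 = 0. Proof. reflexivity. Qed.
Lemma a_1 : a 1 = 1. Proof. reflexivity. Qed.

(* w(n) = least m >= 0 with a(m) >= n; we state "w n = m" as the predicate
   below (m satisfies the property and is least such). *)
Definition is_w (n m : nat) : Prop :=
  a m >= Z.of_nat n /\ forall m', (m' < m)%nat -> a m' < Z.of_nat n.

(* Main.v *)
Require Import Defs.
From Stdlib Require Import ZArith Arith Lia.

Lemma fib_SS m : fib (S (S m)) = (fib (S m) + fib m)%nat.
Proof. reflexivity. Qed.

Lemma fib_S_ge m : (m <= fib (S m))%nat.
Proof.
  induction m as [m IH] using (well_founded_induction lt_wf).
  destruct m as [|[|m]]; [simpl; lia|simpl; lia|].
  rewrite fib_SS. assert (H1 := IH (S m) ltac:(lia)). assert (H2 := IH m ltac:(lia)).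
  destruct m; simpl in *; lia.
Qed.

Lemma fib_mono1 m : (fib m <= fib (S m))%nat.
Proof. destruct m as [|m]; [simpl; lia|]. rewrite fib_SS. lia. Qed.

Lemma fib_le m p : (m <= p)%nat -> (fib m <= fib p)%nat.
Proof.
  induction 1; [lia|]. pose proof (fib_mono1 m0). lia.
Qed.

Lemma fib_pos m : (1 <= m)%nat -> (1 <= fib m)%nat.
Proof. intros H. pose proof (fib_le 1 m H) as H0. change (fib 1) with 1%nat in H0. lia. Qed.

Lemma fib_search_spec fuel : forall j n, (fib j < n)%nat -> (n <= fib (S (j + fuel)))%nat ->
  (j <= fib_search fuel j n)%nat /\ (fib (fib_search fuel j n) < n <= fib (S (fib_search fuel j n)))%nat.
Proof.
  induction fuel; intros j n H1 H2; cbn [fib_search].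
  - rewrite Nat.add_0_r in H2. lia.
  - destruct (Nat.leb_spec n (fib (S j))).
    + lia.
    + destruct (IHfuel (S j) n) as [A B]; [lia| replace (S j + fuel)%nat with (j + S fuel)%nat by lia; auto|].
      split; [lia|auto].
Qed.

Lemma fib_index_spec n : (2 <= n)%nat ->
  (2 <= fib_index n)%nat /\ (fib (fib_index n) < n <= fib (S (fib_index n)))%nat.
Proof.
  intros H. unfold fib_index. apply fib_search_spec.
  - simpl. lia.
  - pose proof (fib_S_ge (2 + n)). lia.
Qed.

Lemma a_fuel_stable f1 : forall f2 n, (n < f1)%nat -> (n < f2)%nat -> a_fuel f1 n = a_fuel f2 n.
Proof.
  induction f1; intros f2 n H1 H2; [lia|]. destruct f2; [lia|]. simpl.
  destruct (n <=? 1)%nat eqn:E; [reflexivity|].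
  apply Nat.leb_gt in E. destruct (fib_index_spec n ltac:(lia)) as [A [B C]].
  pose proof (fib_pos (fib_index n) ltac:(lia)).
  f_equal. apply IHf1; lia.
Qed.

Lemma a_rec n : (2 <= n)%nat ->
  a n = Z.of_nat (fib (S (fib_index n))) - a (n - fib (fib_index n)).
Proof.
  intros H. unfold a at 1. simpl.
  destruct (n <=? 1)%nat eqn:E; [apply Nat.leb_le in E; lia|].
  destruct (fib_index_spec n H) as [A [B C]].
  pose proof (fib_pos (fib_index n) ltac:(lia)).
  f_equal. unfold a. apply a_fuel_stable; lia.
Qed.

Lemma a_bounds m : (1 <= m)%nat -> 1 <= a m /\
  forall t, (3 <= t)%nat -> (m <= fib t)%nat -> a m <= Z.of_nat (fib t) - 1.
Proof.
  induction m as [m IH] using (well_founded_induction lt_wf). intros Hm.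
  destruct (Nat.eq_dec m 1) as [->|Hm1].
  - split; [reflexivity|]. intros t Ht _. pose proof (fib_le 3 t Ht). simpl in H.
    change (a 1) with 1. lia.
  - rewrite a_rec by lia.
    destruct (fib_index_spec m ltac:(lia)) as [A [B C]].
    set (j := fib_index m) in *.
    clearbody j.
    destruct j as [|[|j']]; [lia|lia|].
    assert (Hr : (m - fib (S (S j')) <= fib (S j'))%nat).
    { rewrite fib_SS in C. lia. }
    set (j := S (S j')) in *.
    pose proof (fib_pos j ltac:(lia)).
    destruct (IH (m - fib j)%nat ltac:(lia) ltac:(lia)) as [L U].
    assert (U' := U (S j) ltac:(lia) ltac:(pose proof (fib_le (S j') (S j) ltac:(lia)); lia)).
    split; [lia|].
    intros t Ht Hmt.
    assert (S j <= t)%nat.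
    { destruct (Nat.le_gt_cases (S j) t); auto. pose proof (fib_le t j ltac:(lia)). lia. }
    pose proof (fib_le (S j) t H0). lia.
Qed.

Theorem proposition20 (n k : nat) :
  (2 <= n)%nat -> (fib k <= n < fib (S k))%nat -> is_w n (fib k + 1).
Proof.
  intros Hn [H1 H2].
  assert (Hk : (3 <= k)%nat).
  { destruct k as [|[|[|k]]]; simpl in *; lia. }
  assert (Hfk : (2 <= fib k)%nat) by (pose proof (fib_le 3 k Hk); simpl in *; lia).
  split.
  - rewrite a_rec by lia.
    destruct (fib_index_spec (fib k + 1) ltac:(lia)) as [A [B C]].
    set (j := fib_index (fib k + 1)) in *.
    assert (j = k).
    { destruct (Nat.lt_total j k) as [L|[L|L]]; auto.
      - pose proof (fib_le (S j) k L). lia.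
      - destruct k as [|k']; [lia|].
        pose proof (fib_le (S (S k')) j L). rewrite fib_SS in H.
        pose proof (fib_pos k' ltac:(lia)). lia. }
    rewrite H. replace (fib k + 1 - fib k)%nat with 1%nat by lia.
    change (a 1) with 1. lia.
  - intros m' Hm'.
    destruct m' as [|m'']; [change (a 0) with 0; lia|].
    destruct (a_bounds (S m'') ltac:(lia)) as [_ U].
    pose proof (U k Hk ltac:(lia)). lia.
Qed.
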